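(* Let $\mathcal O^\vee_q$ be the algebra defined in the context, with degrees and subspaces $\mathcal O^\vee_d$ as defined there. For every $d\in\mathbb N$, the subspace $\mathcal O^\vee_d$ is spanned by the products $a_1a_2\cdots a_n$ of essential generators such that both (i) $n\in\mathbb N$ and $\sum_{i=1}^n\deg(a_i)\le d$; and (ii) for $2\le i\le n$, $\deg(a_i)=1$ implies $\deg(a_{i-1})=1$.
   Context: All algebras are associative and unital over a field $\mathbb F$; $q\in\mathbb F$ is nonzero and not a root of unity. For elements $X,Y$ of an algebra, $[X,Y]=XY-YX$ and $[X,Y]_q=qXY-q^{-1}YX$. The algebra $\mathcal O^\vee_q$ is defined by generators (called essential generators) $\mathcal W_0,\mathcal W_1,\{\tilde{\mathcal G}_{k+1}\}_{k\in\mathbb N}$ and relations: $[\mathcal W_0,[\mathcal W_0,[\mathcal W_0,\mathcal W_1]_q]_{q^{-1}}]=(q^2-q^{-2})^2[\mathcal W_1,\mathcal W_0]$; $[\mathcal W_1,[\mathcal W_1,[\mathcal W_1,\mathcal W_0]_q]_{q^{-1}}]=(q^2-q^{-2})^2[\mathcal W_0,\mathcal W_1]$; $[\mathcal W_0,\tilde{\mathcal G}_1]=[\mathcal W_0,[\mathcal W_0,\mathcal W_1]_q]$; $[\tilde{\mathcal G}_1,\mathcal W_1]=[[\mathcal W_0,\mathcal W_1]_q,\mathcal W_1]$; for $k\ge1$: $[\tilde{\mathcal G}_{k+1},\mathcal W_0]=(q^2-q^{-2})^{-2}[\mathcal W_0,[\mathcal W_0,[\mathcal W_1,\tilde{\mathcal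 G}_k]_q]_q]$; for $k\ge1$: $[\mathcal W_1,\tilde{\mathcal G}_{k+1}]=(q^2-q^{-2})^{-2}[[[\tilde{\mathcal G}_k,\mathcal W_0]_q,\mathcal W_1]_q,\mathcal W_1]$; for $k,\ell\in\mathbb N$: $[\tilde{\mathcal G}_{k+1},\tilde{\mathcal G}_{\ell+1}]=0$. Assign degrees $\deg\mathcal W_0=\deg\mathcal W_1=1$ and $\deg\tilde{\mathcal G}_{k+1}=2k+2$ ($k\in\mathbb N$). For $d\in\mathbb N$, $\mathcal O^\vee_d$ is the subspace of $\mathcal O^\vee_q$ spanned by the products $a_1\cdots a_n$ ($n\in\mathbb N$, empty product $=1$) of essential generators with $\sum_i\deg(a_i)\le d$. *)

(* Defs.v *)
From HB Require Import structures.
From mathcomp Require Import all_boot all_order all_algebra.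
Set Implicit Arguments. Unset Strict Implicit. Unset Printing Implicit Defensive.
Import Order.TTheory GRing.Theory Num.Theory.
Local Open Scope ring_scope.

(* Essential generators: EW0 = W_0, EW1 = W_1, EG k = \tilde G_{k+1}. *)
Inductive egen := EW0 | EW1 | EG of nat.

Definition edeg (a : egen) : nat :=
  match a with EW0 => 1 | EW1 => 1 | EG k => (2 * k + 2)%N end.

Definition wdeg (w : seq egen) : nat := \sum_(a <- w) edeg a.

Definition adm_rel (a b : egen) : bool := (edeg b == 1%N) ==> (edeg a == 1%N).
Definition admissible (w : seq egen) : bool := sorted adm_rel w.

Section Alg.
Variables (F : fieldType) (A : algType F).

Definition comm (x y : A) : A := x * y - y * x.
Definition qcomm (p : F) (x y : A) : A := p *: (x * y) - p^-1 *: (y * x).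

Variables (w0 w1 : A) (g : nat -> A).

Definition ev (a : egen) : A :=
  match a with EW0 => w0 | EW1 => w1 | EG k => g k end.

Definition wprod (w : seq egen) : A := \prod_(a <- w) ev a.

Definition in_span (P : pred (seq egen)) (x : A) : Prop :=
  exists (ws : seq (seq egen)) (c : seq egen -> F),
    all P ws /\ x = \sum_(w <- ws) c w *: wprod w.

Definition Oq_relations (q : F) : Prop :=
  let c := (q ^+ 2 - q ^- 2) ^+ 2 in
  (comm w0 (qcomm q^-1 w0 (qcomm q w0 w1)) = c *: comm w1 w0) /\
  (comm w1 (qcomm q^-1 w1 (qcomm q w1 w0)) = c *: comm w0 w1) /\
  (comm w0 (g 0%N) = comm w0 (qcomm q w0 w1)) /\
  (comm (g 0%N) w1 = comm (qcomm q w0 w1) w1) /\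
  (forall k : nat, comm (g k.+1) w0 =
      c^-1 *: comm w0 (qcomm q w0 (qcomm q w1 (g k)))) /\
  (forall k : nat, comm w1 (g k.+1) =
      c^-1 *: comm (qcomm q (qcomm q (g k) w0) w1) w1) /\
  (forall k l : nat, comm (g k) (g l) = 0).

End Alg.

(* Main.v *)
Require Import Defs.
From HB Require Import structures.
From mathcomp Require Import all_boot all_order all_algebra.
From mathcomp Require Import zify.
Import GRing.Theory.
Local Open Scope ring_scope.

Definition egen_eqb (a b : egen) : bool :=
  match a, b with
  | EW0, EW0 => true | EW1, EW1 => true | EG i, EG j => i == j | _, _ => false end.
Lemma egen_eqP : Equality.axiom egen_eqb.
Proof.
case=> [||i] [||j] /=; try by constructor.
by case: eqP => [->|h]; constructor => // [[]].
Qed.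
HB.instance Definition _ := hasDecEq.Build egen egen_eqP.

Section Pf.
Variables (F : fieldType) (A : algType F) (w0 w1 : A) (g : nat -> A).

Local Notation wp := (wprod w0 w1 g).

Inductive Sp (P : pred (seq egen)) : A -> Prop :=
| Sp0 : Sp P 0
| SpC (c : F) (w : seq egen) (y : A) : P w -> Sp P y -> Sp P (c *: wp w + y).

Lemma Sp_word (P : pred (seq egen)) w : P w -> Sp P (wp w).
Proof. by move=> Pw; rewrite -[wp w]addr0 -[wp w]scale1r; apply: SpC => //; apply: Sp0. Qed.

Lemma Sp_add (P : pred (seq egen)) x y : Sp P x -> Sp P y -> Sp P (x + y).
Proof. elim=> [|c w z Pw _ IH] Sy; first by rewrite add0r. by rewrite -addrA; apply: SpC => //; apply: IH. Qed.

Lemma Sp_scale (P : pred (seq egen)) a x : Sp P x -> Sp P (a *: x).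
Proof.
elim=> [|c w z Pw _ IH]; first by rewrite scaler0; apply: Sp0.
by rewrite scalerDr scalerA; apply: SpC.
Qed.

Lemma Sp_opp (P : pred (seq egen)) x : Sp P x -> Sp P (- x).
Proof. by move=> Sx; rewrite -scaleN1r; apply: Sp_scale. Qed.

Lemma Sp_sub (P : pred (seq egen)) x y : Sp P x -> Sp P y -> Sp P (x - y).
Proof. by move=> Sx Sy; apply: Sp_add => //; apply: Sp_opp. Qed.

Lemma Sp_mono (P Q : pred (seq egen)) x : (forall w, P w -> Q w) -> Sp P x -> Sp Q x.
Proof. by move=> PQ; elim=> [|c w z Pw _ IH]; [apply: Sp0 | apply: SpC => //; apply: PQ]. Qed.

Lemma Sp_in_span (P : pred (seq egen)) x : Sp P x -> in_span w0 w1 g P x.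
Proof.
have: forall x, Sp P x -> exists ws (c : seq egen -> F), [/\ uniq ws, all P ws &
   x = \sum_(w <- ws) c w *: wp w].
  move=> {}x; elim=> [|c w y Pw _ [ws [c' [U AP ->]]]].
    by exists [::], (fun _ => 0); rewrite big_nil.
  case: (boolP (w \in ws)) => win.
    exists ws, (fun v => if v == w then c + c' v else c' v); split => //.
    rewrite (bigD1_seq w) //= (bigD1_seq w win U) /= eqxx addrA scalerDl.
    congr (_ + _); apply: eq_bigr => v /negbTE ->; done.
  exists (w :: ws), (fun v => if v == w then c else c' v); split => //=.
  - by rewrite win.
  - by rewrite Pw.
  rewrite big_cons eqxx; congr (_ + _); rewrite big_seq_cond [RHS]big_seq_cond.
  apply: eq_bigr => v /andP [vin _]; case: eqP => // E; by move: win; rewrite -E vin.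
move=> H /H [ws [c [_ AP E]]]; by exists ws, c.
Qed.

Lemma in_span_Sp (P : pred (seq egen)) x : in_span w0 w1 g P x -> Sp P x.
Proof.
move=> [ws [c [AP ->]]]; elim: ws AP => [|w ws IH] /=; first by move=> _; rewrite big_nil; apply: Sp0.
by move=> /andP [Pw AP]; rewrite big_cons; apply: SpC => //; apply: IH.
Qed.

Definition Sn (n : nat) := Sp (fun w => (wdeg w <= n)%N && admissible w).

Lemma wdeg_cons a w : wdeg (a :: w) = (edeg a + wdeg w)%N.
Proof. by rewrite /wdeg big_cons. Qed.

Lemma wp_cons a w : wp (a :: w) = ev w0 w1 g a * wp w.
Proof. by rewrite /wprod big_cons. Qed.

Lemma Sn_le n m x : (n <= m)%N -> Sn n x -> Sn m x.
Proof. move=> nm; apply: Sp_mono => w /andP [h ->]; rewrite andbT; lia. Qed.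

Lemma Sn_add n x y : Sn n x -> Sn n y -> Sn n (x + y).
Proof. exact: Sp_add. Qed.
Lemma Sn_scale n a x : Sn n x -> Sn n (a *: x).
Proof. exact: Sp_scale. Qed.
Lemma Sn_le' n m x : Sn n x -> (n <= m)%N -> Sn m x.
Proof. by move=> h nm; apply: Sn_le nm h. Qed.
Arguments Sn_le' {n m x}.

Lemma Sn_mulW a n y : edeg a = 1%N -> Sn n y -> Sn (1 + n) (ev w0 w1 g a * y).
Proof.
move=> ea; elim=> [|c w z /andP [dw aw] _ IH]; first by rewrite mulr0; apply: Sp0.
rewrite mulrDr -scalerAr -wp_cons; apply: SpC => //.
rewrite wdeg_cons ea /admissible /=; apply/andP; split; first lia.
by case: w aw {dw} => //= b w ->; rewrite andbT /adm_rel ea eqxx implybT.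
Qed.

Lemma Sn_w0 n y : Sn n y -> Sn (1 + n) (w0 * y).
Proof. exact: (@Sn_mulW EW0). Qed.
Lemma Sn_w1 n y : Sn n y -> Sn (1 + n) (w1 * y).
Proof. exact: (@Sn_mulW EW1). Qed.

Definition good (m : nat) (y : A) :=
  forall u, admissible u -> Sn (m + wdeg u) (y * wp u).

Lemma good_add m x y : good m x -> good m y -> good m (x + y).
Proof. by move=> gx gy u au; rewrite mulrDl; apply: Sp_add; [apply: gx|apply: gy]. Qed.
Lemma good_scale m a x : good m x -> good m (a *: x).
Proof. by move=> gx u au; rewrite -scalerAl; apply: Sp_scale; apply: gx. Qed.
Lemma good_sub m x y : good m x -> good m y -> good m (x - y).
Proof.
move=> gx gy; apply: good_add => //; rewrite -scaleN1r; exact: good_scale.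
Qed.
Lemma good_1 : good 0 1.
Proof. by move=> u au; rewrite mul1r; apply: Sp_word; rewrite au leqnn. Qed.
Lemma good_w0l m x : good m x -> good m.+1 (w0 * x).
Proof. by move=> gx u au; rewrite -mulrA; have := Sn_w0 _ _ (gx u au); by rewrite add1n addSn. Qed.
Lemma good_w1l m x : good m x -> good m.+1 (w1 * x).
Proof. by move=> gx u au; rewrite -mulrA; have := Sn_w1 _ _ (gx u au); by rewrite add1n addSn. Qed.
Lemma good_Wr a m x : edeg a = 1%N -> good m x -> good m.+1 (x * ev w0 w1 g a).
Proof.
move=> ea gx u au; rewrite -mulrA -wp_cons.
have au' : admissible (a :: u).
  by rewrite /admissible /=; case: u au => //= b u ->; rewrite andbT /adm_rel ea eqxx implybT.
by have := gx _ au'; rewrite wdeg_cons ea addnA addn1.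
Qed.
Lemma good_w0r m x : good m x -> good m.+1 (x * w0).
Proof. exact: (@good_Wr EW0). Qed.
Lemma good_w1r m x : good m x -> good m.+1 (x * w1).
Proof. exact: (@good_Wr EW1). Qed.

Lemma good_comm0 m x : good m x -> good m.+1 (comm w0 x).
Proof. by move=> gx; apply: good_sub; [apply: good_w0l|apply: good_w0r]. Qed.
Lemma good_comm0r m x : good m x -> good m.+1 (comm x w0).
Proof. by move=> gx; apply: good_sub; [apply: good_w0r|apply: good_w0l]. Qed.
Lemma good_comm1 m x : good m x -> good m.+1 (comm w1 x).
Proof. by move=> gx; apply: good_sub; [apply: good_w1l|apply: good_w1r]. Qed.
Lemma good_comm1r m x : good m x -> good m.+1 (comm x w1).
Proof. by move=> gx; apply: good_sub; [apply: good_w1r|apply: good_w1l]. Qed.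
Lemma good_qcomm0 p m x : good m x -> good m.+1 (qcomm p w0 x).
Proof. by move=> gx; apply: good_sub; apply: good_scale; [apply: good_w0l|apply: good_w0r]. Qed.
Lemma good_qcomm0r p m x : good m x -> good m.+1 (qcomm p x w0).
Proof. by move=> gx; apply: good_sub; apply: good_scale; [apply: good_w0r|apply: good_w0l]. Qed.
Lemma good_qcomm1 p m x : good m x -> good m.+1 (qcomm p w1 x).
Proof. by move=> gx; apply: good_sub; apply: good_scale; [apply: good_w1l|apply: good_w1r]. Qed.
Lemma good_qcomm1r p m x : good m x -> good m.+1 (qcomm p x w1).
Proof. by move=> gx; apply: good_sub; apply: good_scale; [apply: good_w1r|apply: good_w1l]. Qed.

Lemma good_w0 : good 1 w0.
Proof. by rewrite -[w0]mul1r; apply: good_w0r; apply: good_1. Qed.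
Lemma good_w1 : good 1 w1.
Proof. by rewrite -[w1]mul1r; apply: good_w1r; apply: good_1. Qed.


Arguments good_comm0 {m x}. Arguments good_comm0r {m x}.
Arguments good_comm1 {m x}. Arguments good_comm1r {m x}.
Arguments good_qcomm0 {p m x}. Arguments good_qcomm0r {p m x}.
Arguments good_qcomm1 {p m x}. Arguments good_qcomm1r {p m x}.
Arguments good_scale {m a x}.
Lemma good_eq m n x : m = n -> good m x -> good n x.
Proof. by move=> ->. Qed.

Lemma adm_tail a u : admissible (a :: u) -> admissible u.
Proof. exact: path_sorted. Qed.

Lemma good_G k : good (2 * k + 2 + 1) (g k * w0 - w0 * g k) ->
  good (2 * k + 2 + 1) (g k * w1 - w1 * g k) -> good (2 * k + 2) (g k).
Proof.
move=> h0 h1 u; elim: u => [|a u IH] au.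
  have -> : g k * wp [::] = wp [:: EG k] by rewrite /wprod !big_cons !big_nil.
  apply: Sp_word; rewrite /admissible /= /wdeg !big_cons !big_nil /=; lia.
move: au; case: a => [||j] au; have au' := path_sorted au.
- have -> : g k * wp (EW0 :: u) = (g k * w0 - w0 * g k) * wp u + w0 * (g k * wp u).
    by rewrite wp_cons /= mulrBl !mulrA subrK.
  apply: Sn_add; first by move: (h0 u au') => /Sn_le'; apply; rewrite wdeg_cons /=; lia.
  by move: (Sn_w0 _ _ (IH au')) => /Sn_le'; apply; rewrite wdeg_cons /=; lia.
- have -> : g k * wp (EW1 :: u) = (g k * w1 - w1 * g k) * wp u + w1 * (g k * wp u).
    by rewrite wp_cons /= mulrBl !mulrA subrK.
  apply: Sn_add; first by move: (h1 u au') => /Sn_le'; apply; rewrite wdeg_cons /=; lia.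
  by move: (Sn_w1 _ _ (IH au')) => /Sn_le'; apply; rewrite wdeg_cons /=; lia.
- have -> : g k * wp (EG j :: u) = wp (EG k :: EG j :: u) by rewrite [RHS]wp_cons.
  apply: Sp_word; apply/andP; split; first by rewrite !wdeg_cons /=; lia.
  rewrite /admissible /= -[path _ _ _]/(admissible (EG j :: u)) au andbT /adm_rel /=.
  by apply/implyP => /eqP; lia.
Qed.

Lemma key (q : F) : Oq_relations w0 w1 g q -> forall k, good (2 * k + 2) (g k).
Proof.
case=> [_ [_ [r3 [r4 [r5 [r6 _]]]]]]; elim=> [|k IH]; apply: good_G.
- have -> : g 0%N * w0 - w0 * g 0%N = - comm w0 (g 0%N) by rewrite /comm opprB.
  rewrite r3 -scaleN1r; apply: good_scale.
  exact: good_comm0 (good_qcomm0 good_w1).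
- have -> : g 0%N * w1 - w1 * g 0%N = comm (g 0%N) w1 by [].
  rewrite r4; exact: good_comm1r (good_qcomm0 good_w1).
- have -> : g k.+1 * w0 - w0 * g k.+1 = comm (g k.+1) w0 by [].
  rewrite r5; apply: good_scale; apply: (good_eq _ _ _ _ (good_comm0 (good_qcomm0 (good_qcomm1 IH)))).
  lia.
- have -> : g k.+1 * w1 - w1 * g k.+1 = - comm w1 (g k.+1) by rewrite /comm opprB.
  rewrite r6 -scaleN1r; apply: good_scale; apply: good_scale.
  apply: (good_eq _ _ _ _ (good_comm1r (good_qcomm1r (good_qcomm0r IH)))).
  lia.
Qed.

Lemma Sn_G (q : F) : Oq_relations w0 w1 g q -> forall k n y, Sn n y -> Sn (2 * k + 2 + n) (g k * y).
Proof.
move=> hr k n y; elim=> [|c w z /andP [dw aw] _ IH]; first by rewrite mulr0; apply: Sp0.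
rewrite mulrDr -scalerAr; apply: Sn_add => //; apply: Sn_scale.
by move: (key _ hr k w aw) => /Sn_le'; apply; lia.
Qed.

Lemma Sn_all (q : F) : Oq_relations w0 w1 g q -> forall w, Sn (wdeg w) (wp w).
Proof.
move=> hr; elim=> [|a w IH].
  by apply: Sp_word; rewrite /wdeg big_nil.
rewrite wp_cons wdeg_cons; case: a => [||k] /=.
- exact: Sn_w0.
- exact: Sn_w1.
- exact: Sn_G hr k _ _ IH.
Qed.

End Pf.

Theorem proposition9p4 (F : fieldType) (q : F)
  (hq0 : q != 0) (hq : forall n : nat, (0 < n)%N -> q ^+ n != 1)
  (A : algType F) (w0 w1 : A) (g : nat -> A)
  (hrel : Oq_relations w0 w1 g q) (d : nat) (x : A) :
  in_span w0 w1 g (fun w => (wdeg w <= d)%N) x <->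
  in_span w0 w1 g (fun w => (wdeg w <= d)%N && admissible w) x.
Proof.
split; last first.
  by move=> [ws [c [AP E]]]; exists ws, c; split => //; apply: sub_all AP => w /andP [].
move=> [ws [c [AP ->]]]; apply: Sp_in_span.
elim: ws AP => [|w ws IH] /=; first by move=> _; rewrite big_nil; apply: Sp0.
move=> /andP [dw AP]; rewrite big_cons; apply: Sp_add; last exact: IH.
by apply: Sp_scale; move: (Sn_all _ _ _ _ _ _ hrel w) => /Sn_le'; apply.
Qed.
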